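(* Let $\mathbf{x} \in \Omega$ be fixed, let $S_{\mathbf{x}} \subseteq S$ be the set of values occurring in $\mathbf{x}$, and suppose $G, G' \in \mathcal{F}$ agree both cumulatively and pointwise on $S_{\mathbf{x}}$. Let $\mathbf{Y}$ be a sample of $n$ i.i.d. draws with order statistics $Y_{(1)} \le \dots \le Y_{(n)}$. Then for every $i \in \{1,\dots,n\}$, $$P_G[x_{(i)} = Y_{(i)} \mid Y_{(j)} = x_{(j)}\ \forall j < i] = P_{G'}[x_{(i)} = Y_{(i)} \mid Y_{(j)} = x_{(j)}\ \forall j < i]$$ and $$P_G[x_{(i)} < Y_{(i)} \mid Y_{(j)} = x_{(j)}\ \forall j < i] = P_{G'}[x_{(i)} < Y_{(i)} \mid Y_{(j)} = x_{(j)}\ \forall j < i],$$ where for $i = 1$ the conditioning is vacuous (unconditional probabilities), and for $i \ge 2$ the conditioning event is assumed to have positive probability under $G$ and under $G'$.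
   Context: $S \subset \mathbb{R}$ is a finite set, $\mathcal{F}$ the set of probability distributions on $S$, and $\Omega$ the set of samples of size $n$ with entries in $S$, identified with their sorted versions $x_{(1)} \le \dots \le x_{(n)}$. $P_H$ denotes probability when the entries of $\mathbf{Y}$ are i.i.d. with distribution $H$. For $C \subseteq S$, $G,G'$ agree pointwise on $C$ if $P_G[X = s] = P_{G'}[X = s]$ for all $s \in C$, and cumulatively on $C$ if $P_G[X \le s] = P_{G'}[X \le s]$ for all $s \in C$, where $X$ is a single draw. *)

(* Defs.v *)
From HB Require Import structures.
From mathcomp Require Import all_boot all_order all_algebra.
From mathcomp Require Import reals.
Set Implicit Arguments. Unset Strict Implicit. Unset Printing Implicit Defensive.
Import Order.TTheory GRing.Theory Num.Theory.
Local Open Scope ring_scope.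

(* The finite support set S ⊂ ℝ is given as a duplicate-free list S : seq R;
   its elements form the finite type [seq_sub S]. *)
Section Defs.
Variable R : realType.
Variable S : seq R.
Local Notation T := (seq_sub S).

Definition is_dist (g : {ffun T -> R}) : Prop :=
  (forall s, 0 <= g s) /\ \sum_(s : T) g s = 1.

(* P_H[A] for the sample Y of n i.i.d. draws with distribution H. *)
Definition prob (n : nat) (g : {ffun T -> R}) (A : pred (n.-tuple T)) : R :=
  \sum_(y : n.-tuple T | A y) \prod_(k < n) g (tnth y k).

Definition cprob (n : nat) (g : {ffun T -> R}) (A B : pred (n.-tuple T)) : R :=
  prob g [pred y | A y && B y] / prob g B.

(* sorted version of a sample: order statistics z_(1) <= ... <= z_(n),
   stored 0-indexed *)
Definition ostat (n : nat) (y : n.-tuple T) : seq R := sort <=%R (map val y).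

(* i-th order statistic, 0-indexed (i.e. z_(i+1)) *)
Definition ost (n : nat) (y : n.-tuple T) (i : nat) : R := nth 0 (ostat y) i.

Definition prefix_event (n : nat) (x : n.-tuple T) (i : nat) : pred (n.-tuple T) :=
  [pred y | [forall j : 'I_n, (j < i)%N ==> (ost y j == ost x j)]].

Definition agree_pointwise (C : pred T) (g g' : {ffun T -> R}) : Prop :=
  forall s, C s -> g s = g' s.

Definition cdf (g : {ffun T -> R}) (s : T) : R :=
  \sum_(t : T | val t <= val s) g t.

Definition agree_cumulative (C : pred T) (g g' : {ffun T -> R}) : Prop :=
  forall s, C s -> cdf g s = cdf g' s.

End Defs.

(* Main.v *)
Require Import Defs.
From HB Require Import structures.
From mathcomp Require Import all_boot all_order all_algebra.
From mathcomp Require Import reals.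
Import Order.TTheory GRing.Theory Num.Theory.
Local Open Scope ring_scope.
Set Implicit Arguments. Unset Strict Implicit.

Section Gen.
Variable R : realType.
Variable T : finType.

Lemma sum_tuple_prod n (F : 'I_n -> T -> R) (P : 'I_n -> pred T) :
  \sum_(y : n.-tuple T | [forall k, P k (tnth y k)]) \prod_k F k (tnth y k)
  = \prod_k \sum_(s | P k s) F k s.
Proof.
rewrite bigA_distr_big_dep.
rewrite (reindex (fun f : {ffun 'I_n -> T} => [tuple f k | k < n])).
  apply: eq_big => [f|f _].
    apply/forallP/familyP => H k; have := H k; by rewrite tnth_mktuple.
  by apply: eq_bigr => k _; rewrite tnth_mktuple.
exists (fun y : n.-tuple T => [ffun k => tnth y k]) => [f _|y _].
  by apply/ffunP => k; rewrite ffunE tnth_mktuple.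
by apply: eq_from_tnth => k; rewrite tnth_mktuple ffunE.
Qed.

Lemma prob_inv n (g g' : T -> R) (V : finType) (c : T -> V) (A : pred (n.-tuple T)) :
  (forall v, \sum_(s | c s == v) g s = \sum_(s | c s == v) g' s) ->
  (forall y y' : n.-tuple T, map c y = map c y' -> A y = A y') ->
  \sum_(y : n.-tuple T | A y) \prod_(k < n) g (tnth y k) =
  \sum_(y : n.-tuple T | A y) \prod_(k < n) g' (tnth y k).
Proof.
move=> Hv HA.
rewrite (partition_big (fun y => map_tuple c y) predT) //.
rewrite [RHS](partition_big (fun y => map_tuple c y) predT) //.
apply: eq_bigr => z _.
case: (pickP (fun y => A y && (map_tuple c y == z))) => [y0 /andP[Ay0 /eqP ey0] | N]; last first.
  by rewrite !big_pred0.
have E : forall y, (A y && (map_tuple c y == z)) = [forall k, c (tnth y k) == tnth z k].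
  move=> y; apply/andP/forallP => [[_ /eqP <-] k|H]; first by rewrite tnth_map.
  have ez : map_tuple c y = z by apply: eq_from_tnth => k; rewrite tnth_map; apply/eqP.
  split; last by rewrite ez.
  rewrite (HA y y0) //; have := congr1 val ez; have := congr1 val ey0; by move=> /= -> ->.
rewrite !(eq_bigl _ _ E) (sum_tuple_prod (fun=> g) (fun k s => c s == tnth z k)) (sum_tuple_prod (fun=> g') (fun k s => c s == tnth z k)).
by apply: eq_bigr => k _; apply: Hv.
Qed.
End Gen.

Section S1.
Variable R : realType.

Lemma nth_sorted_count (s : seq R) (p : pred R) j :
  sorted <=%R s -> (forall u w, p u -> w <= u -> p w) -> (j < size s)%N ->
  p (nth 0 s j) = (j < count p s)%N.
Proof.
move=> + Hp; elim: s j => [|h t IH] j //= Hs Hj.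
have Ht : sorted <=%R t := path_sorted Hs.
case ph: (p h).
  case: j Hj => [|j] Hj //=; rewrite add1n ltnS; exact: IH.
have Hall : all (<=%R h) t by apply: order_path_min => //; exact: le_trans.
have cnt : count p t = 0%N.
  apply/eqP; rewrite -leqn0 leqNgt -has_count; apply/hasP => -[w wt pw].
  by rewrite (Hp w h pw) in ph; move/allP: Hall => /(_ w wt).
rewrite cnt add0n ltn0; apply/negbTE/negP => pn.
have : nth 0 (h :: t) j \in h :: t by rewrite mem_nth.
rewrite inE => /orP[/eqP e|wt]; first by rewrite e ph in pn.
by rewrite (Hp _ h pn) in ph; move/allP: Hall => /(_ _ wt).
Qed.

Variable S : seq R.
Local Notation T := (seq_sub S).

Lemma ost_count n (y : n.-tuple T) (j : nat) (p : pred R) :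
  (forall u w, p u -> w <= u -> p w) -> (j < n)%N ->
  p (ost y j) = (j < count (fun t : T => p (val t)) y)%N.
Proof.
move=> Hp Hj; rewrite /ost /ostat nth_sorted_count //.
- by rewrite (permP (permEl (perm_sort _ _))) count_map.
- by apply: sort_sorted; exact: le_total.
- by rewrite size_sort size_map size_tuple.
Qed.

Lemma count_inv (V : eqType) (c : T -> V) (q : pred T) (y y' : seq T) :
  map c y = map c y' -> (forall t t', c t = c t' -> q t = q t') ->
  count q y = count q y'.
Proof.
move=> + Hq; elim: y y' => [|a y IH] [|a' y'] //= [e1 e2].
by rewrite (Hq _ _ e1) (IH _ e2).
Qed.

Lemma ost_in n (x : n.-tuple T) (j : nat) : (j < n)%N -> exists2 a, a \in x & ost x j = val a.
Proof.
move=> Hj; have : ost x j \in map val x.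
  rewrite -(mem_sort <=%R) /ost /ostat mem_nth // size_sort size_map size_tuple //.
by case/mapP => a ax ->; exists a.
Qed.
End S1.

Section S2.
Variable R : realType.
Variable S : seq R.
Local Notation T := (seq_sub S).
Variable n : nat.
Variable x : n.-tuple T.

Definition cc (t : T) : {set T} * {set T} :=
  ([set u | (u \in x) && (val u <= val t)], [set u | (u \in x) && (val u < val t)]).

Lemma cc_lt (a t t' : T) : a \in x -> cc t = cc t' -> (val t < val a) = (val t' < val a).
Proof.
move=> ax e; have := congr1 (fun p : {set T} * {set T} => a \in p.1) e.
by rewrite /= !inE ax /= !ltNge => ->.
Qed.

Lemma cc_le (a t t' : T) : a \in x -> cc t = cc t' -> (val t <= val a) = (val t' <= val a).
Proof.
move=> ax e; have := congr1 (fun p : {set T} * {set T} => a \in p.2) e.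
by rewrite /= !inE ax /= !leNgt => ->.
Qed.

Lemma ost_inv (y y' : n.-tuple T) j (a : T) : map cc y = map cc y' -> (j < n)%N -> a \in x ->
  (ost y j < val a) = (ost y' j < val a) /\ (ost y j <= val a) = (ost y' j <= val a).
Proof.
move=> e jn ax; split.
  rewrite !(@ost_count R S n _ j (fun u => u < val a)) //; last 2 first.
  - by move=> u w /= h1 h2; exact: le_lt_trans h2 h1.
  - by move=> u w /= h1 h2; exact: le_lt_trans h2 h1.
  by congr (_ < _)%N; apply: count_inv e _ => t t' /(cc_lt ax).
rewrite !(@ost_count R S n _ j (fun u => u <= val a)) //; last 2 first.
- by move=> u w /= h1 h2; exact: le_trans h2 h1.
- by move=> u w /= h1 h2; exact: le_trans h2 h1.
by congr (_ < _)%N; apply: count_inv e _ => t t' /(cc_le ax).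
Qed.

Lemma ost_inv_eq (y y' : n.-tuple T) j : map cc y = map cc y' -> (j < n)%N ->
  (ost y j == ost x j) = (ost y' j == ost x j).
Proof.
move=> e jn; have [a ax ->] := ost_in x jn.
have [h1 h2] := ost_inv e jn ax.
by rewrite !eq_le !(leNgt (val a)) h1 h2.
Qed.

Lemma ost_inv_gt (y y' : n.-tuple T) j : map cc y = map cc y' -> (j < n)%N ->
  (ost x j < ost y j) = (ost x j < ost y' j).
Proof.
move=> e jn; have [a ax ->] := ost_in x jn.
have [h1 h2] := ost_inv e jn ax.
by rewrite !ltNge h2.
Qed.

Lemma prefix_inv (y y' : n.-tuple T) (i : nat) : map cc y = map cc y' ->
  prefix_event x i y = prefix_event x i y'.
Proof.
move=> e; rewrite /prefix_event /=; apply: eq_forallb => j.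
by rewrite (ost_inv_eq e (ltn_ord j)).
Qed.

Lemma dist_eq (G G' : {ffun T -> R}) :
  is_dist G -> is_dist G' ->
  agree_pointwise (fun s => s \in x) G G' ->
  agree_cumulative (fun s => s \in x) G G' ->
  forall v, \sum_(s | cc s == v) G s = \sum_(s | cc s == v) G' s.
Proof.
move=> [_ sG] [_ sG'] H1 Hc v.
pose H s := G s - G' s.
suff : \sum_(s | cc s == v) H s = 0 by rewrite sumrB => /eqP; rewrite subr_eq0 => /eqP.
have H1' : forall a, a \in x -> H a = 0 by move=> a ax; rewrite /H H1 // subrr.
have H2 : forall a, a \in x -> \sum_(t | val t <= val a) H t = 0.
  by move=> a ax; rewrite sumrB; have := Hc a ax; rewrite /cdf => ->; rewrite subrr.
have H3 : \sum_t H t = 0 by rewrite sumrB sG sG' subrr.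
have H4 : forall a, a \in x -> \sum_(t | val t < val a) H t = 0.
  move=> a ax; have := H2 a ax; rewrite (bigD1 a) //= H1' // add0r => e; rewrite -[RHS]e.
  by apply: eq_bigl => t; rewrite lt_neqAle val_eqE andbC.
have H6 : forall a, a \in x -> \sum_(t | val a <= val t) H t = 0.
  move=> a ax; have := H3; rewrite (bigID (fun t => val t < val a)) /= H4 // add0r => e; rewrite -[RHS]e.
  by apply: eq_bigl => t; rewrite leNgt.
case: (pickP (fun s => cc s == v)) => [s0 /eqP <- | N]; last by rewrite big_pred0.
case s0x: (s0 \in x).
  have -> : \sum_(s | cc s == cc s0) H s = \sum_(s | s == s0) H s; last by rewrite big_pred1_eq H1'.
  apply: eq_bigl => s; apply/eqP/eqP => [e|->] //.
  have := congr1 (fun p : {set T} * {set T} => s0 \in p.1) e; have := congr1 (fun p : {set T} * {set T} => s0 \in p.2) e.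
  rewrite /= !inE s0x /= ltxx lexx => /negbT; rewrite -leNgt => h1 h2.
  by apply: val_inj; apply/eqP; rewrite eq_le h1 h2.
pose lowOK s := [forall a, ((a \in x) && (val a < val s0)) ==> (val a < val (s : T))].
pose upOK s := [forall a, ((a \in x) && (val s0 < val a)) ==> (val (s : T) < val a)].
have E : forall s, (cc s == cc s0) = lowOK s && upOK s.
  move=> s; apply/eqP/andP => [e|[/forallP lo /forallP up]].
    split; apply/forallP => a; apply/implyP => /andP[ax h].
      have := congr1 (fun p : {set T} * {set T} => a \in p.2) e; rewrite /= !inE ax /= h => -> //.
    have := congr1 (fun p : {set T} * {set T} => a \in p.1) e; rewrite /= !inE ax /= (leNgt (val a) (val s0)) h /=.
    by move/negbT; rewrite -ltNge.
  have K : forall u, u \in x -> ((val u <= val s) = (val u <= val s0)) /\ ((val u < val s) = (val u < val s0)).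
    move=> u ux; case: (ltgtP (val u) (val s0)) => h.
    - by have := implyP (lo u); rewrite ux h => /(_ isT) h'; rewrite h' (ltW h').
    - have := implyP (up u); rewrite ux h => /(_ isT) h'.
      by rewrite !(leNgt (val u)) !(ltNge (val u)) h' (ltW h').
    - by move/val_inj: h => e; rewrite -e ux in s0x.
  congr (_, _); apply/setP => u; rewrite !inE; case ux: (u \in x) => //=; by case: (K u ux).
have -> : \sum_(s | cc s == cc s0) H s = \sum_(s | lowOK s && upOK s) H s by apply: eq_bigl.
have L1 : \sum_(s | ~~ lowOK s) H s = 0.
  case: (pickP (fun a => (a \in x) && (val a < val s0))) => [a0 Pa0 | N]; last first.
    rewrite big_pred0 // => s; apply/negbF/forallP => a; by rewrite N.
  case: (@arg_maxP _ _ _ a0 (fun a : T => (a \in x) && (val a < val s0)) (fun a : T => val a) Pa0) => b /andP[bx bs] Hb.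
  rewrite -[RHS](H2 b bx); apply: eq_bigl => s; rewrite negb_forall; apply/existsP/idP.
    case=> a; rewrite negb_imply -leNgt => /andP[/andP[ax h] h'].
    exact: le_trans h' (Hb a (introT andP (conj ax h))).
  by move=> h; exists b; rewrite negb_imply bx bs -leNgt.
have L2 : \sum_(s | lowOK s && ~~ upOK s) H s = 0.
  case: (pickP (fun a => (a \in x) && (val s0 < val a))) => [a0 Pa0 | N]; last first.
    rewrite big_pred0 // => s; rewrite (_ : upOK s = true) ?andbF //.
    by apply/forallP => a; rewrite N.
  case: (@arg_minP _ _ _ a0 (fun a : T => (a \in x) && (val s0 < val a)) (fun a : T => val a) Pa0) => b /andP[bx bs] Hb.
  rewrite -[RHS](H6 b bx); apply: eq_bigl => s; apply/andP/idP.
    case=> _; rewrite negb_forall => /existsP[a]; rewrite negb_imply -leNgt => /andP[/andP[ax h] h'].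
    exact: le_trans (Hb a (introT andP (conj ax h))) h'.
  move=> h; split.
    apply/forallP => a; apply/implyP => /andP[_ h1].
    exact: lt_le_trans (lt_trans h1 bs) h.
  by rewrite negb_forall; apply/existsP; exists b; rewrite negb_imply bx bs -leNgt.
have := H3; rewrite (bigID lowOK) /= L1 addr0 (bigID upOK) /= L2 addr0.
by [].
Qed.
End S2.

Theorem lemma10 (R : realType) (S : seq R) (n : nat)
  (x : n.-tuple (seq_sub S)) (G G' : {ffun seq_sub S -> R}) :
  is_dist G -> is_dist G' ->
  agree_pointwise (fun s => s \in x) G G' ->
  agree_cumulative (fun s => s \in x) G G' ->
  forall i : 'I_n,
    ((0 < i)%N -> 0 < prob G (prefix_event x i) /\ 0 < prob G' (prefix_event x i)) ->
    cprob G [pred y | ost x i == ost y i] (prefix_event x i) =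
      cprob G' [pred y | ost x i == ost y i] (prefix_event x i)
    /\
    cprob G [pred y | ost x i < ost y i] (prefix_event x i) =
      cprob G' [pred y | ost x i < ost y i] (prefix_event x i).
Proof.
move=> dG dG' Hp Hc i _.
have D := dist_eq dG dG' Hp Hc.
have P : forall A : pred (n.-tuple (seq_sub S)),
    (forall y y' : n.-tuple (seq_sub S), map (cc x) y = map (cc x) y' -> A y = A y') ->
    prob G A = prob G' A.
  by move=> A HA; rewrite /prob; apply: prob_inv D HA.
have Hpre : forall y y' : n.-tuple (seq_sub S), map (cc x) y = map (cc x) y' ->
    prefix_event x i y = prefix_event x i y'.
  by move=> y y' e; apply: prefix_inv.
rewrite /cprob (P _ Hpre); split; congr (_ / _); apply: P => y y' e /=.
  by rewrite !(eq_sym (ost x i)) (ost_inv_eq e (ltn_ord i)) (Hpre y y' e).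
by rewrite (ost_inv_gt e (ltn_ord i)) (Hpre y y' e).
Qed.
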